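(* Consider problem (P2) with constraints C1 and C4 removed, i.e. maximize over the binary selection $x\in\{0,1\}^K$ (equivalently over sets $\Psi\subseteq\mathcal{K}$) the value $EE^*_\Psi$. Suppose the trading EEs satisfy, after relabeling, $EE^*_1>EE^*_2>\dots>EE^*_K$. Algorithm 2 is: set $\Psi=\emptyset$; for $k=1,\dots,K$ in this order, if $EE^*_{\Psi\cup\{k\}}>EE^*_\Psi$ then replace $\Psi$ by $\Psi\cup\{k\}$; output $\Psi$. Then the set $\Psi$ output by Algorithm 2 is optimal, i.e. $EE^*_\Psi\ge EE^*_{\Psi'}$ for every $\Psi'\subseteq\mathcal{K}$.
   Context: Setting: $\mathcal{K}=\{1,\dots,K\}$ macro users (MUs), $\mathcal{N}=\{1,\dots,N\}$ small-cell users (SUs). Constants: $N_0>0$, $\xi\in(0,1]$, $P_{\rm c}>0$; for each $k$: $W^k_{MC}>0$, $R^k_{MC}>0$, $h_k>0$, $g_{k,n}>0$ ($n\in\mathcal{N}$); for each $n$: $B^n_{SC}>0$, $g_n>0$. Let $k'\in\arg\max_{n}g_{k,n}$ and $\rho(b,p,g)=b\log_2(1+\frac{pg}{bN_0})$ ($=0$ if $b=0$). For $\Psi\subseteq\mathcal{K}$, $EE^*_\Psi$ is the optimal value of: with $x_k=\mathbf 1[k\in\Psi]$, maximize over $p_n\ge0$, $p_{k,k'}\ge0$, $b_{k,k'}\ge0$, $q_k\ge0$, $w_k\ge0$ $$\frac{\sum_{n}\rho(B^n_{SC},p_n,g_n)+\sum_{k}x_k\rho(b_{k,k'},p_{k,k'},g_{k,k'})}{\sum_n\frac{p_n}{\xi}+\sum_kx_k\frac{p_{k,k'}}{\xi}+\sum_kx_k\frac{q_k}{\xi}+P_{\rm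 c}}$$ subject only to $b_{k,k'}+w_k=x_kW^k_{MC}$ and $\rho(w_k,q_k,h_k)=x_kR^k_{MC}$ for all $k$ (no total power constraint and no minimum system rate constraint). For each $k$, the trading EE $EE^*_k$ is the optimal value of: maximize over $p_{k,k'}\ge0$, $b_{k,k'}\ge0$, $q_k\ge0$, $w_k\ge0$ the ratio $\frac{\rho(b_{k,k'},p_{k,k'},g_{k,k'})}{p_{k,k'}/\xi+q_k/\xi}$ subject to $b_{k,k'}+w_k\le W^k_{MC}$ and $\rho(w_k,q_k,h_k)\ge R^k_{MC}$. *)

(* Defs.v *)
From HB Require Import structures.
From mathcomp Require Import all_boot all_order all_algebra.
From mathcomp Require Import all_classical all_reals.
From mathcomp Require Import exp.
Set Implicit Arguments. Unset Strict Implicit. Unset Printing Implicit Defensive.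
Import Order.TTheory GRing.Theory Num.Theory.
Local Open Scope classical_set_scope.
Local Open Scope ring_scope.

Section Defs.
Variable R : realType.

Definition rho (N0 b p g : R) : R :=
  if b == 0 then 0 else b * (ln (1 + p * g / (b * N0)) / ln 2).

Variables (K N : nat).

Definition xsel (Psi : {set 'I_K}) (k : 'I_K) : R := if k \in Psi then 1 else 0.

(* Parameters: N0, xi, Pc, W_MC, R_MC, h, g (g k n = g_{k,n}), kp (k'),
   B_SC, gs (g_n). *)
Definition EEobj_set (N0 xi Pc : R) (W Rm h : 'I_K -> R) (g : 'I_K -> 'I_N -> R)
  (kp : 'I_K -> 'I_N) (B gs : 'I_N -> R) (Psi : {set 'I_K}) : set R :=
  [set r | exists (p : 'I_N -> R) (pk bk qk wk : 'I_K -> R),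
     (forall n, 0 <= p n) /\
     (forall k, [/\ 0 <= pk k, 0 <= bk k, 0 <= qk k & 0 <= wk k]) /\
     (forall k, bk k + wk k = xsel Psi k * W k) /\
     (forall k, rho N0 (wk k) (qk k) (h k) = xsel Psi k * Rm k) /\
     r = (\sum_(n < N) rho N0 (B n) (p n) (gs n)
          + \sum_(k < K) xsel Psi k * rho N0 (bk k) (pk k) (g k (kp k)))
         / (\sum_(n < N) p n / xi + \sum_(k < K) xsel Psi k * (pk k / xi)
            + \sum_(k < K) xsel Psi k * (qk k / xi) + Pc)].

Definition EEopt N0 xi Pc W Rm h g kp B gs Psi : R :=
  sup (EEobj_set N0 xi Pc W Rm h g kp B gs Psi).

Definition EEtrade_set (N0 xi : R) (W Rm h : 'I_K -> R) (g : 'I_K -> 'I_N -> R)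
  (kp : 'I_K -> 'I_N) (k : 'I_K) : set R :=
  [set r | exists pkk bkk qk wk : R,
     [/\ 0 <= pkk, 0 <= bkk, 0 <= qk & 0 <= wk] /\
     bkk + wk <= W k /\ Rm k <= rho N0 wk qk (h k) /\
     r = rho N0 bkk pkk (g k (kp k)) / (pkk / xi + qk / xi)].

Definition EEtrade N0 xi W Rm h g kp k : R :=
  sup (EEtrade_set N0 xi W Rm h g kp k).

Definition alg2 (EE : {set 'I_K} -> R) : {set 'I_K} :=
  foldl (fun Psi k => if EE Psi < EE (k |: Psi) then k |: Psi else Psi)
        (finset.set0 : {set 'I_K}) (enum 'I_K).

End Defs.

(* Main.v *)
Require Import Defs.
From HB Require Import structures.
From mathcomp Require Import all_boot all_order all_algebra.
From mathcomp Require Import all_classical all_reals.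
From mathcomp Require Import exp.
From mathcomp Require Import sequences convex ring lra.
Import Order.TTheory GRing.Theory Num.Theory.
Local Open Scope ring_scope.
Section Greedy.
Context {R : realType} {K : nat} (EE : {set 'I_K} -> R) (E : 'I_K -> R).
Hypothesis F2 : forall (S P : {set 'I_K}) (mu : R), EE S <= mu ->
  (forall k, k \in S -> k \notin P -> mu < E k) ->
  (forall k, k \in P -> k \notin S -> E k <= mu) -> EE P <= mu.
Hypothesis F3 : forall (S : {set 'I_K}) (k : 'I_K), k \notin S -> EE S < E k -> EE S < EE (k |: S).
Hypothesis hord : forall i j : 'I_K, (i < j)%N -> E j < E i.

Definition gstep (Psi : {set 'I_K}) (k : 'I_K) :=
  if EE Psi < EE (k |: Psi) then k |: Psi else Psi.

Definition Inv (Psi D : {set 'I_K}) :=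
  [/\ (forall k, k \in D -> k \notin Psi -> E k <= EE Psi), (forall x, x \in Psi -> x \in D) &
     (Psi = finset.set0 \/ exists2 m, m \in Psi &
        (forall j, j \in Psi -> j != m -> E m < E j) /\ EE (Psi :\ m) < EE Psi)].

Lemma inv_step Psi D k : Inv Psi D -> k \notin D ->
  (forall d, d \in D -> (d < k)%N) -> Inv (gstep Psi k) (k |: D).
Proof.
move=> [I1 I2 I3] kD dk.
have kPsi : k \notin Psi by apply/negP => kP; move/negP: kD; apply; exact: I2 _ kP.
rewrite /gstep; case: ltP => hlt.
- split.
  + move=> j; rewrite !in_setU1 => /predU1P[->|jD]; first by rewrite eqxx.
    case/norP => _ jP; exact: (le_trans (I1 _ jD jP) (ltW hlt)).
  + by move=> x; rewrite !in_setU1 => /predU1P[->|/I2 ->]; rewrite ?eqxx ?orbT.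
  + right; exists k; first by rewrite setU11.
    split; last by rewrite setU1K.
    move=> j; rewrite in_setU1 => /predU1P[->|jP]; first by rewrite eqxx.
    move=> _; apply: hord; apply: dk; exact: I2 _ jP.
- split.
  + move=> j; rewrite in_setU1 => /predU1P[->|jD] jP; last exact: I1.
    by rewrite leNgt; apply/negP => /(F3 _ _ kPsi); rewrite ltNge hlt.
  + by move=> x /I2 xD; rewrite in_setU1 xD orbT.
  + exact: I3.
Qed.

Lemma inv_fold (s : seq 'I_K) Psi D : Inv Psi D ->
  (forall k, k \in s -> k \notin D) ->
  (forall d k, d \in D -> k \in s -> (d < k)%N) ->
  sorted (fun i j : 'I_K => (i < j)%N) s ->
  Inv (foldl gstep Psi s) (D :|: [set x in s]).
Proof.
elim: s Psi D => [|k s IH] Psi D hI hs hds hsort /=.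
  have -> : D :|: [set x in [::]] = D.
    by apply/setP => x; rewrite !inE orbF.
  done.
have hpath : path (fun i j : 'I_K => (i < j)%N) k s by [].
have htr : transitive (fun i j : 'I_K => (i < j)%N).
  by move=> y x z; apply: ltn_trans.
have hall := order_path_min htr hpath.
have -> : D :|: [set x in k :: s] = (k |: D) :|: [set x in s].
  by apply/setP => x; rewrite !inE orbA (orbC (x \in D)).
apply: IH.
- apply: inv_step => //; first by apply: hs; rewrite inE eqxx.
  by move=> d dD; apply: hds => //; rewrite inE eqxx.
- move=> x xs; rewrite in_setU1 negb_or; apply/andP; split.
    move: (allP hall x xs) => /= kx; apply/eqP => ex; move: kx; by rewrite ex ltnn.
  by apply: hs; rewrite inE xs orbT.
- move=> d x; rewrite in_setU1 => /predU1P[->|dD] xs.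
    exact: (allP hall x xs).
  by apply: hds => //; rewrite inE xs orbT.
- by move: hsort => /=; case: s {hs hds hpath hall} => //= a s /andP[].
Qed.

Lemma greedy_opt : forall P, EE P <= EE (alg2 EE).
Proof.
move=> P.
have hsort : sorted (fun i j : 'I_K => (i < j)%N) (enum 'I_K).
  by have := iota_ltn_sorted 0 K; rewrite -val_enum_ord sorted_map.
have hI0 : Inv finset.set0 finset.set0.
  split; [by move=> k; rewrite inE | by move=> x; rewrite inE | by left].
have h1 : forall k, k \in enum 'I_K -> k \notin (finset.set0 : {set 'I_K}).
  by move=> k _; rewrite inE.
have h2 : forall d k, d \in (finset.set0 : {set 'I_K}) -> k \in enum 'I_K -> (d < k)%N.
  by move=> d k; rewrite inE.
have := @inv_fold (enum 'I_K) _ _ hI0 h1 h2 hsort.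
rewrite /alg2 -/gstep.
set Psi := foldl _ _ _.
have -> : finset.set0 :|: [set x in enum 'I_K] = [set: 'I_K].
  by apply/setP => x; rewrite !inE mem_enum.
move=> [I1 _ I3].
have I1' : forall k, k \notin Psi -> E k <= EE Psi by move=> k; apply: I1; rewrite inE.
case: I3 => [P0|[m mP [hm hlt]]].
  apply: (@F2 (finset.set0 : {set 'I_K}) P (EE Psi)).
  - by rewrite -P0.
  - by move=> k; rewrite inE.
  - by move=> k _ _; apply: I1'; rewrite P0 inE.
have hEm : EE Psi <= E m.
  rewrite leNgt; apply/negP => hEm.
  have : EE Psi <= Num.max (EE (Psi :\ m)) (E m).
    apply: (F2 (Psi :\ m)); first by rewrite le_max lexx.
      by move=> k; rewrite !inE => /andP[_ ->].
    move=> k kP; rewrite !inE kP andbT negbK => /eqP ->.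
    by rewrite le_max lexx orbT.
  by rewrite le_max => /orP[h|h]; [move: hlt; rewrite ltNge h | move: hEm; rewrite ltNge h].
have hk : forall k, k \in Psi -> k != m -> EE Psi < E k.
  by move=> k kP km; apply: (le_lt_trans hEm); apply: hm.
case: (boolP (m \in P)) => mP'.
  apply: (F2 (Psi)) => //.
    move=> k kP kP'; apply: hk => //; apply/eqP => ekm; move: kP'; rewrite ekm mP'.
    done.
  by move=> k _; apply: I1'.
apply: (F2 (Psi :\ m)); first exact: ltW.
  move=> k; rewrite !inE => /andP[km kP] _; exact: hk.
move=> k kP; rewrite !inE negb_and negbK => /orP[/eqP ekm|]; last exact: I1'.
by move: mP'; rewrite -ekm kP.
Qed.

End Greedy.
Set Implicit Arguments. Unset Strict Implicit. Unset Printing Implicit Defensive.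
Lemma ln2_gt0 {R : realType} : 0 < ln (2 : R).
Proof. by apply: ln_gt0; lra. Qed.

Ltac pos := solve [ assumption | exact: ln2_gt0 | exact: sqrtr_ge0 | exact: expR_gt0 | lra
  | (apply: divr_ge0; pos) | (apply: mulr_ge0; pos) | (apply: addr_ge0; pos)
  | (rewrite invr_ge0; pos) | (rewrite invr_gt0; pos)
  | (apply: mulr_gt0; pos) | (apply: divr_gt0; pos) | (apply: ltW; pos) ].

Section RhoLemmas.
Context {R : realType} (N0 : R) (hN0 : 0 < N0).

Lemma ln_conc (t x : R) : 0 <= t -> t <= 1 -> 0 <= x ->
  t * ln (1 + x) <= ln (1 + t * x).
Proof.
move=> t0 t1 x0.
have := @concave_ln R (interval_inference.Itv01 t0 t1) (1 + x) 1 ltac:(lra) ltac:(lra).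
rewrite !convRE /= /unstable.onem ln1 mulr0 addr0.
by have -> : t * (1 + x) + (1 - t) * 1 = 1 + t * x by lra.
Qed.

Lemma rho0b (p g : R) : rho N0 0 p g = 0.
Proof. by rewrite /rho eqxx. Qed.

Lemma rho_pos (b p g : R) : 0 < b -> rho N0 b p g = b * (ln (1 + p * g / (b * N0)) / ln 2).
Proof. by move=> b0; rewrite /rho gt_eqF. Qed.

Lemma rho_ge0 (b p g : R) : 0 <= b -> 0 <= p -> 0 <= g -> 0 <= rho N0 b p g.
Proof.
rewrite le_eqVlt => /predU1P[<-|b0] p0 g0; first by rewrite rho0b.
have l2 := @ln2_gt0 R.
rewrite rho_pos //; apply: mulr_ge0; first lra.
apply: divr_ge0; last lra.
apply: ln_ge0; rewrite lerDl; apply: divr_ge0; first exact: mulr_ge0.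
by apply: mulr_ge0; apply: ltW.
Qed.

Lemma rho_lin (b p g : R) : 0 <= b -> 0 <= p -> 0 <= g ->
  rho N0 b p g <= p * g / (N0 * ln 2).
Proof.
rewrite le_eqVlt => /predU1P[<-|b0] p0 g0.
  by rewrite rho0b; pos.
have l2 := @ln2_gt0 R.
set y := p * g / (b * N0).
have y0 : 0 <= y by rewrite /y; pos.
have h1 : ln (1 + y) <= y by apply: le_ln1Dx; lra.
have h2 : b * ln (1 + y) <= p * g / N0.
  have -> : p * g / N0 = b * y by rewrite /y; field; rewrite ?gt_eqF.
  by rewrite ler_pM2l.
have -> : p * g / (N0 * ln 2) = (p * g / N0) / ln 2 by field; rewrite ?gt_eqF.
by rewrite rho_pos // mulrA ler_pM2r ?invr_gt0.
Qed.

Lemma rho_sqrt (b p g : R) : 0 <= b -> 0 <= p -> 0 <= g ->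
  rho N0 b p g <= 2 / ln 2 * Num.sqrt (b ^+ 2 + b * p * g / N0).
Proof.
rewrite le_eqVlt => /predU1P[<-|b0] p0 g0.
  by rewrite rho0b; pos.
have l2 := @ln2_gt0 R.
set y := p * g / (b * N0).
have y0 : 0 <= y by rewrite /y; pos.
have e : b ^+ 2 + b * p * g / N0 = b ^+ 2 * (1 + y).
  rewrite /y; field; rewrite ?gt_eqF //.
rewrite e sqrtrM; last by rewrite exprn_ge0 //; lra.
rewrite sqrtr_sqr ger0_norm; last lra.
rewrite rho_pos // -/y.
have s0 : 0 < Num.sqrt (1 + y) by rewrite sqrtr_gt0; lra.
have hl : ln (1 + y) <= 2 * Num.sqrt (1 + y).
  rewrite -{1}(sqr_sqrtr (_ : 0 <= 1 + y)); last by lra.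
  rewrite lnXn // mulr2n.
  have := ln_sublinear s0; lra.
have h2 : b * ln (1 + y) <= b * (2 * Num.sqrt (1 + y)) by rewrite ler_pM2l.
have -> : 2 / ln 2 * (b * Num.sqrt (1 + y)) = b * (2 * Num.sqrt (1 + y)) / ln 2.
  by field; rewrite gt_eqF.
by rewrite mulrA ler_pM2r ?invr_gt0.
Qed.

Lemma rho_monob (b1 b2 p g : R) : 0 <= b1 -> b1 <= b2 -> 0 <= p -> 0 <= g ->
  rho N0 b1 p g <= rho N0 b2 p g.
Proof.
rewrite le_eqVlt => /predU1P[<-|b0] b12 p0 g0.
  by rewrite rho0b rho_ge0.
have b20 : 0 < b2 by lra.
have l2 := @ln2_gt0 R.
rewrite !rho_pos // !mulrA ler_pM2r ?invr_gt0 //.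
set x := p * g / (b1 * N0).
have x0 : 0 <= x by rewrite /x; pos.
have t0 : 0 <= b1 / b2 by rewrite divr_ge0 ?ltW.
have t1 : b1 / b2 <= 1 by rewrite ler_pdivrMr // mul1r.
have := @ln_conc (b1 / b2) x t0 t1 x0.
have -> : b1 / b2 * x = p * g / (b2 * N0).
  by rewrite /x; field; rewrite ?gt_eqF.
move=> H; move: (ler_wpM2l (ltW b20) H).
have -> : b2 * (b1 / b2 * ln (1 + x)) = b1 * ln (1 + x) by field; rewrite gt_eqF.
done.
Qed.

Lemma rho_qmono (w q q' hh : R) : 0 < w -> 0 < hh -> 0 <= q -> 0 <= q' ->
  rho N0 w q' hh <= rho N0 w q hh -> q' <= q.
Proof.
move=> w0 h0 q0 q'0; rewrite !rho_pos //.
have l2 := @ln2_gt0 R.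
rewrite !mulrA ler_pM2r ?invr_gt0 // ler_pM2l //.
have d0 : 0 < w * N0 by rewrite mulr_gt0.
rewrite ler_ln ?posrE; last 2 first.
- by rewrite ltr_pwDl //; pos.
- by rewrite ltr_pwDl //; pos.
by rewrite lerD2l ler_pM2r ?invr_gt0 // ler_pM2r.
Qed.

Definition qstar (r w hh : R) := (expR (r * ln 2 / w) - 1) * w * N0 / hh.

Lemma qstar_spec (r w hh : R) : 0 < r -> 0 < w -> 0 < hh ->
  0 < qstar r w hh /\ rho N0 w (qstar r w hh) hh = r.
Proof.
move=> r0 w0 h0; have l2 := @ln2_gt0 R.
have e1 : 1 < expR (r * ln 2 / w) by rewrite expR_gt1 divr_gt0 ?mulr_gt0.
split.
  by rewrite /qstar !divr_gt0 ?mulr_gt0 // subr_gt0.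
rewrite rho_pos //.
have -> : 1 + qstar r w hh * hh / (w * N0) = expR (r * ln 2 / w).
  by rewrite /qstar; field; rewrite ?gt_eqF.
by rewrite expRK; field; rewrite ?gt_eqF.
Qed.

Lemma rho_q0 (w hh : R) : rho N0 w 0 hh = 0.
Proof. by rewrite /rho; case: ifP => // _; rewrite !mul0r addr0 ln1 mul0r mulr0. Qed.

End RhoLemmas.
Section Analysis.
Context {R : realType} {K N : nat}
  (N0 xi Pc : R) (W Rm h : 'I_K -> R) (g : 'I_K -> 'I_N -> R)
  (kp : 'I_K -> 'I_N) (B gs : 'I_N -> R)
  (hN0 : 0 < N0) (hxi0 : 0 < xi) (hPc : 0 < Pc)
  (hW : forall k, 0 < W k) (hRm : forall k, 0 < Rm k) (hh : forall k, 0 < h k)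
  (hg : forall k n, 0 < g k n) (hB : forall n, 0 < B n) (hgs : forall n, 0 < gs n).

Local Notation rho := (rho N0).
Local Notation E := (EEtrade N0 xi W Rm h g kp).
Local Notation EE := (EEopt N0 xi Pc W Rm h g kp B gs).
Local Notation gk k := (g k (kp k)).

Definition ctr (pk qk : R) := pk / xi + qk / xi.

Definition feasT k (pk bk qk wk : R) :=
  [/\ 0 <= pk, 0 <= bk, 0 <= qk & 0 <= wk] /\ bk + wk <= W k /\ Rm k <= rho wk qk (h k).

Lemma tradeP k r : EEtrade_set N0 xi W Rm h g kp k r <->
  exists pk bk qk wk, feasT k pk bk qk wk /\ r = rho bk pk (gk k) / ctr pk qk.
Proof.
split => [[pk [bk [qk [wk [H1 [H2 [H3 H4]]]]]]]|[pk [bk [qk [wk [[H1 [H2 H3]] H4]]]]]];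
  by exists pk, bk, qk, wk.
Qed.

Lemma feasT_pos k pk bk qk wk : feasT k pk bk qk wk -> 0 < qk /\ 0 < wk.
Proof.
move=> [[p0 b0 q0 w0] [hbw hr]]; have := hRm k => hR.
split.
  rewrite lt_def q0 andbT; apply/eqP => q00; move: hr; rewrite q00 rho_q0; lra.
rewrite lt_def w0 andbT; apply/eqP => w00; move: hr; rewrite w00 rho0b; lra.
Qed.

Lemma ctr_pos k pk bk qk wk : feasT k pk bk qk wk -> 0 < ctr pk qk.
Proof.
move=> hf; have [q0 _] := feasT_pos hf; case: hf => [[p0 _ _ _] _].
rewrite /ctr; have : 0 < qk / xi by pos.
have : 0 <= pk / xi by pos.
lra.
Qed.

Lemma rho_le_ctr k pk bk qk wk : feasT k pk bk qk wk ->
  rho bk pk (gk k) <= (gk k * xi / (N0 * ln 2)) * ctr pk qk.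
Proof.
move=> hf; have [q0 _] := feasT_pos hf; case: hf => [[p0 b0 _ _] _].
have g0 := hg k (kp k); have l2 := @ln2_gt0 R.
apply: (le_trans (rho_lin hN0 b0 p0 (ltW g0))).
have -> : pk * gk k / (N0 * ln 2) = (gk k * xi / (N0 * ln 2)) * (pk / xi).
  by field; rewrite !gt_eqF.
rewrite ler_pM2l; last by pos.
rewrite /ctr lerDl; pos.
Qed.

Lemma trade_ub k : has_ubound (EEtrade_set N0 xi W Rm h g kp k).
Proof.
exists (gk k * xi / (N0 * ln 2)) => r /tradeP [pk [bk [qk [wk [hf ->]]]]].
have c0 := ctr_pos hf.
by rewrite ler_pdivrMr //; apply: rho_le_ctr hf.
Qed.

Lemma feasT_qstar k : feasT k 0 0 (qstar N0 (Rm k) (W k) (h k)) (W k).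
Proof.
have [q0 hq] := qstar_spec hN0 (hRm k) (hW k) (hh k).
split; first by split => //; apply: ltW.
by rewrite hq add0r; split.
Qed.

Lemma trade_ne k : (EEtrade_set N0 xi W Rm h g kp k !=set0)%classic.
Proof.
exists (rho 0 0 (gk k) / ctr 0 (qstar N0 (Rm k) (W k) (h k))).
by apply/tradeP; do 4 eexists; split; first exact: feasT_qstar.
Qed.

Lemma trade_le k pk bk qk wk : feasT k pk bk qk wk ->
  rho bk pk (gk k) <= E k * ctr pk qk.
Proof.
move=> hf; have c0 := ctr_pos hf.
rewrite -ler_pdivrMr //.
apply: ub_le_sup; first exact: trade_ub.
by apply/tradeP; do 4 eexists; split; first exact: hf.
Qed.

Lemma trade_good k mu : 0 <= mu -> mu < E k ->
  exists pk bk qk wk, [/\ 0 <= pk, 0 <= bk, 0 <= qk & 0 <= wk] /\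
    bk + wk = W k /\ rho wk qk (h k) = Rm k /\
    0 < rho bk pk (gk k) - mu * ctr pk qk.
Proof.
move=> mu0 /(sup_gt (trade_ne k)) [r /tradeP [pk [bk [qk [wk [hf ->]]]]] hlt].
have c0 := ctr_pos hf.
have [q0 w0] := feasT_pos hf.
case: (hf) => [[p0 b0 _ _] [hbw hr]].
have [qs0 hqs] := qstar_spec hN0 (hRm k) w0 (hh k).
exists pk, (W k - wk), (qstar N0 (Rm k) wk (h k)), wk.
split; first by split => //; [lra | apply: ltW | apply: ltW].
split; first by lra.
split => //.
have hqle : qstar N0 (Rm k) wk (h k) <= qk.
  apply: (rho_qmono hN0 w0 (hh k) (ltW q0) (ltW qs0)); by rewrite hqs.
have hrle : rho bk pk (gk k) <= rho (W k - wk) pk (gk k).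
  apply: rho_monob => //; [lra | exact: ltW].
have hcle : ctr pk (qstar N0 (Rm k) wk (h k)) <= ctr pk qk.
  by rewrite /ctr lerD2l ler_pM2r ?invr_gt0.
move: hlt; rewrite ltr_pdivlMr // => hlt.
have : mu * ctr pk (qstar N0 (Rm k) wk (h k)) <= mu * ctr pk qk by apply: ler_wpM2l.
lra.
Qed.

Definition Nsm (p : 'I_N -> R) := \sum_(n < N) rho (B n) (p n) (gs n).
Definition Nsk (Psi : {set 'I_K}) (pk bk : 'I_K -> R) :=
  \sum_(k < K) xsel R Psi k * rho (bk k) (pk k) (gk k).
Definition Num (Psi : {set 'I_K}) (p : 'I_N -> R) (pk bk : 'I_K -> R) :=
  Nsm p + Nsk Psi pk bk.

Definition Dsm (p : 'I_N -> R) := \sum_(n < N) p n / xi.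
Definition Dsk (Psi : {set 'I_K}) (f : 'I_K -> R) := \sum_(k < K) xsel R Psi k * (f k / xi).
Definition Den (Psi : {set 'I_K}) (p : 'I_N -> R) (pk qk : 'I_K -> R) :=
  Dsm p + Dsk Psi pk + Dsk Psi qk + Pc.

Definition Feas (Psi : {set 'I_K}) (p : 'I_N -> R) (pk bk qk wk : 'I_K -> R) :=
  (forall n, 0 <= p n) /\
  (forall k, [/\ 0 <= pk k, 0 <= bk k, 0 <= qk k & 0 <= wk k]) /\
  (forall k, bk k + wk k = xsel R Psi k * W k) /\
  (forall k, rho (wk k) (qk k) (h k) = xsel R Psi k * Rm k).

Lemma EEsetP Psi r : EEobj_set N0 xi Pc W Rm h g kp B gs Psi r <->
  exists p pk bk qk wk, Feas Psi p pk bk qk wk /\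
    r = Num Psi p pk bk / Den Psi p pk qk.
Proof.
split => [[p [pk [bk [qk [wk [H1 [H2 [H3 [H4 H5]]]]]]]]]|
          [p [pk [bk [qk [wk [[H1 [H2 [H3 H4]]] H5]]]]]]];
  by exists p, pk, bk, qk, wk.
Qed.

Lemma xsel01 (Psi : {set 'I_K}) k : xsel R Psi k = 1 /\ k \in Psi \/ xsel R Psi k = 0 /\ k \notin Psi.
Proof. by rewrite /xsel; case: (boolP (k \in Psi)) => H; [left | right]. Qed.

Lemma xsel_ge0 (Psi : {set 'I_K}) k : 0 <= xsel R Psi k :> R.
Proof. by rewrite /xsel; case: ifP. Qed.

Lemma xselU1 (S : {set 'I_K}) k j : xsel R (k |: S) j = if j == k then 1 else xsel R S j :> R.
Proof. by rewrite /xsel in_setU1; case: eqP. Qed.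

Lemma le_sum1 (I : finType) (F : I -> R) i : (forall j, 0 <= F j) -> F i <= \sum_j F j.
Proof. by move=> F0; rewrite (bigD1 i) //= lerDl sumr_ge0. Qed.

Lemma Dsm_ge0 p : (forall n, 0 <= p n) -> 0 <= Dsm p.
Proof. by move=> H1; apply: sumr_ge0 => n _; move: (H1 n) => ?; pos. Qed.

Lemma Dsk_ge0 Psi f : (forall k, 0 <= f k) -> 0 <= Dsk Psi f.
Proof.
by move=> H; apply: sumr_ge0 => k _; move: (xsel_ge0 Psi k) (H k) => ? ?; pos.
Qed.

Lemma Feas_ge0 Psi p pk bk qk wk : Feas Psi p pk bk qk wk ->
  [/\ 0 <= Dsm p, 0 <= Dsk Psi pk & 0 <= Dsk Psi qk].
Proof.
move=> [H1 [H2 _]]; split; first exact: Dsm_ge0.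
  by apply: Dsk_ge0 => k; case: (H2 k).
by apply: Dsk_ge0 => k; case: (H2 k).
Qed.

Lemma Den_pos Psi p pk bk qk wk : Feas Psi p pk bk qk wk -> 0 < Den Psi p pk qk.
Proof. by move=> /Feas_ge0 [a1 a2 a3]; rewrite /Den; have := hPc; lra. Qed.


Lemma Num_ge0 Psi p pk bk qk wk : Feas Psi p pk bk qk wk -> 0 <= Num Psi p pk bk.
Proof.
move=> [H1 [H2 _]].
rewrite /Num; apply: addr_ge0; apply: sumr_ge0 => i _.
  by apply: rho_ge0 => //; apply: ltW.
apply: mulr_ge0; first exact: xsel_ge0.
case: (H2 i) => *; apply: rho_ge0 => //; exact: ltW.
Qed.

Definition Mb := \sum_(n < N) B n + \sum_(k < K) W k.
Definition Gm := \sum_(n < N) gs n + \sum_(k < K) gk k.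
Definition Cc := (N + K)%:R * (2 / ln 2) : R.
Definition ca := Mb ^+ 2.
Definition cd := Mb * xi * Gm / N0.

Lemma Mb_ge0 : 0 <= Mb.
Proof. by apply: addr_ge0; apply: sumr_ge0 => i _; apply: ltW. Qed.
Lemma Gm_ge0 : 0 <= Gm.
Proof. by apply: addr_ge0; apply: sumr_ge0 => i _; apply: ltW. Qed.
Lemma Cc_ge0 : 0 <= Cc.
Proof. by rewrite /Cc; apply: mulr_ge0 => //; pos. Qed.
Lemma ca_ge0 : 0 <= ca.
Proof. by rewrite /ca exprn_ge0 // Mb_ge0. Qed.
Lemma cd_ge0 : 0 <= cd.
Proof. have := Mb_ge0; have := Gm_ge0; rewrite /cd => *; pos. Qed.

Lemma B_le_Mb n : B n <= Mb.
Proof.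
rewrite /Mb; have : 0 <= \sum_(k < K) W k by apply: sumr_ge0 => i _; apply: ltW.
have := le_sum1 n (fun j => ltW (hB j)); lra.
Qed.
Lemma W_le_Mb k : W k <= Mb.
Proof.
rewrite /Mb; have : 0 <= \sum_(n < N) B n by apply: sumr_ge0 => i _; apply: ltW.
have := le_sum1 k (fun j => ltW (hW j)); lra.
Qed.
Lemma gs_le_Gm n : gs n <= Gm.
Proof.
rewrite /Gm; have : 0 <= \sum_(k < K) gk k by apply: sumr_ge0 => i _; apply: ltW.
have := le_sum1 n (fun j => ltW (hgs j)); lra.
Qed.
Lemma g_le_Gm k : gk k <= Gm.
Proof.
rewrite /Gm; have : 0 <= \sum_(n < N) gs n by apply: sumr_ge0 => i _; apply: ltW.
have := le_sum1 k (fun j => ltW (hg j (kp j))); lra.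
Qed.

Lemma mono3 (a b c A' B' C' : R) : 0 <= a -> a <= A' -> 0 <= b -> b <= B' ->
  0 <= c -> c <= C' -> a * b * c <= A' * B' * C'.
Proof.
move=> a0 aA b0 bB c0 cC.
apply: ler_pM; [pos | done | | done].
by apply: ler_pM.
Qed.

Lemma term_bound (b p gg Y : R) : 0 <= b -> b <= Mb -> 0 <= p -> p <= xi * Y ->
  0 <= gg -> gg <= Gm ->
  rho b p gg <= 2 / ln 2 * Num.sqrt (ca + cd * Y).
Proof.
move=> b0 bM p0 pY g0 gG.
apply: (le_trans (rho_sqrt hN0 b0 p0 g0)).
have l2 := @ln2_gt0 R.
rewrite ler_pM2l; last by pos.
rewrite ler_sqrt; last first.
  have Y0 : 0 <= Y.
    have : 0 <= xi * Y by lra.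
    by rewrite pmulr_rge0.
  by apply: addr_ge0; [exact: ca_ge0 | apply: mulr_ge0 => //; exact: cd_ge0].
apply: lerD.
  by rewrite /ca !expr2; apply: ler_pM.
have -> : cd * Y = Mb * (xi * Y) * Gm / N0 by rewrite /cd; field; rewrite gt_eqF.
rewrite ler_pM2r ?invr_gt0 //.
by apply: mono3.
Qed.

Lemma sqrt_le1D (z : R) : 0 <= z -> Num.sqrt z <= 1 + z.
Proof.
move=> z0; rewrite -(@ger0_norm _ (1 + z)); last lra.
rewrite -sqrtr_sqr ler_sqrt; last by rewrite exprn_ge0 //; lra.
rewrite expr2; nra.
Qed.

Lemma Feas_p Psi p pk bk qk wk n : Feas Psi p pk bk qk wk ->
  p n <= xi * Den Psi p pk qk.
Proof.
move=> hf; have [H1 _] := hf; have [a1 a2 a3] := Feas_ge0 hf.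
have e : p n = xi * (p n / xi) by field; rewrite gt_eqF.
rewrite [X in X <= _]e ler_pM2l //.
have h1 : p n / xi <= Dsm p.
  by apply: (le_sum1 n (fun j => _)) => j; move: (H1 j) => ?; pos.
rewrite /Den; have := hPc; lra.
Qed.

Lemma Feas_pk Psi p pk bk qk wk k : Feas Psi p pk bk qk wk -> k \in Psi ->
  pk k <= xi * Den Psi p pk qk.
Proof.
move=> hf kP; have [H1 [H2 _]] := hf; have [a1 a2 a3] := Feas_ge0 hf.
have e : pk k = xi * (xsel R Psi k * (pk k / xi)).
  by rewrite /xsel kP mul1r; field; rewrite gt_eqF.
rewrite [X in X <= _]e ler_pM2l //.
have h1 : xsel R Psi k * (pk k / xi) <= Dsk Psi pk.
  apply: (le_sum1 k (fun j => _)) => j.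
  move: (xsel_ge0 Psi j) => ?; case: (H2 j) => *; pos.
rewrite /Den; have := hPc; lra.
Qed.

Lemma Num_bound Psi p pk bk qk wk : Feas Psi p pk bk qk wk ->
  Num Psi p pk bk <= Cc * Num.sqrt (ca + cd * Den Psi p pk qk).
Proof.
move=> hf; have [H1 [H2 [H3 _]]] := hf.
set Y := Den Psi p pk qk.
set T := 2 / ln 2 * Num.sqrt (ca + cd * Y).
have l2 := @ln2_gt0 R.
have T0 : 0 <= T by rewrite /T; pos.
have s1 : \sum_(n < N) rho (B n) (p n) (gs n) <= \sum_(n < N) T.
  apply: ler_sum => n _; apply: term_bound.
  - exact: ltW.
  - exact: B_le_Mb.
  - exact: H1.
  - exact: (Feas_p n hf).
  - exact: ltW.
  - exact: gs_le_Gm.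
have s2 : \sum_(k < K) xsel R Psi k * rho (bk k) (pk k) (gk k) <= \sum_(k < K) T.
  apply: ler_sum => k _.
  case: (xsel01 Psi k) => [[-> kP]|[-> _]]; last by rewrite mul0r.
  rewrite mul1r; case: (H2 k) => p0 b0 q0 w0.
  apply: term_bound => //.
  - have := H3 k; rewrite /xsel kP mul1r; have := W_le_Mb k; lra.
  - exact: (Feas_pk hf kP).
  - exact: ltW.
  - exact: g_le_Gm.
rewrite /Num /Nsm /Nsk; apply: (le_trans (lerD s1 s2)).
rewrite !sumr_const !card_ord -![T *+ _]mulr_natr -mulrDr -natrD /T /Cc.
by rewrite [_ * (N + K)%:R]mulrC -[in leRHS]mulrA lexx.
Qed.

Lemma set_ne Psi : (EEobj_set N0 xi Pc W Rm h g kp B gs Psi !=set0)%classic.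
Proof.
pose qk := fun k => if k \in Psi then qstar N0 (Rm k) (W k) (h k) else 0.
have hf : Feas Psi (fun _ => 0) (fun _ => 0) (fun _ => 0) qk (fun k => xsel R Psi k * W k).
  split => //; split; last split.
  - move=> k; split => //; last first.
      by apply: mulr_ge0; [exact: xsel_ge0 | exact: ltW].
    rewrite /qk; case: ifP => // _.
    by have [/ltW ? _] := qstar_spec hN0 (hRm k) (hW k) (hh k).
  - by move=> k; rewrite add0r.
  - move=> k; rewrite /qk; case: (xsel01 Psi k) => [[-> kP]|[-> kP]].
      by rewrite kP !mul1r; have [_ ->] := qstar_spec hN0 (hRm k) (hW k) (hh k).
    by rewrite (negbTE kP) !mul0r rho0b.
eexists; apply/EEsetP; do 5 eexists; split; first exact: hf.
reflexivity.
Qed.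

Definition Ubd := Cc * (1 + ca) / Pc + Cc * cd.

Lemma set_ub Psi : has_ubound (EEobj_set N0 xi Pc W Rm h g kp B gs Psi).
Proof.
exists Ubd => r /EEsetP [p [pk [bk [qk [wk [hf ->]]]]]].
have Y0 := Den_pos hf.
set Y := Den Psi p pk qk in Y0 *.
rewrite ler_pdivrMr //.
apply: (le_trans (Num_bound hf)); rewrite -/Y.
have C0 := Cc_ge0; have a0 := ca_ge0; have d0 := cd_ge0.
have hs := sqrt_le1D (_ : 0 <= ca + cd * Y).
have {}hs : Num.sqrt (ca + cd * Y) <= 1 + (ca + cd * Y) by apply: hs; pos.
apply: (le_trans (ler_wpM2l C0 hs)).
have hY : 1 <= Y / Pc.
  rewrite ler_pdivlMr // mul1r /Y /Den.
  by have [a1 a2 a3] := Feas_ge0 hf; lra.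
rewrite /Ubd.
have e : Cc * (1 + ca) / Pc * Y = Cc * (1 + ca) * (Y / Pc) by rewrite mulrAC -mulrA.
rewrite mulrDl e.
have : Cc * (1 + ca) <= Cc * (1 + ca) * (Y / Pc).
  rewrite -{1}[Cc * (1 + ca)]mulr1; apply: ler_wpM2l => //; pos.
have : Cc * (ca + cd * Y) = Cc * ca + Cc * cd * Y by ring.
lra.
Qed.

Lemma EE_ub Psi r : EEobj_set N0 xi Pc W Rm h g kp B gs Psi r -> r <= EE Psi.
Proof. by move=> Hr; rewrite /EEopt; apply: ub_le_sup => //; exact: set_ub. Qed.

Lemma EE_least Psi mu :
  (forall r, EEobj_set N0 xi Pc W Rm h g kp B gs Psi r -> r <= mu) -> EE Psi <= mu.
Proof. by move=> H; rewrite /EEopt; apply: ge_sup => //; exact: set_ne. Qed.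

Lemma elt_ge0 Psi p pk bk qk wk : Feas Psi p pk bk qk wk ->
  0 <= Num Psi p pk bk / Den Psi p pk qk.
Proof.
move=> hf; apply: divr_ge0; first exact: Num_ge0 hf.
exact: ltW (Den_pos hf).
Qed.

Lemma EE_ge0 Psi : 0 <= EE Psi.
Proof.
have [r Hr] := set_ne Psi.
apply: le_trans (EE_ub Hr).
by move/EEsetP: Hr => [p [pk [bk [qk [wk [hf ->]]]]]]; exact: elt_ge0 hf.
Qed.

Lemma decomp Psi p pk bk qk mu :
  Num Psi p pk bk - mu * Den Psi p pk qk =
  (Nsm p - mu * (Dsm p + Pc)) +
  \sum_(k < K) xsel R Psi k * (rho (bk k) (pk k) (gk k) - mu * ctr (pk k) (qk k)).
Proof.
have -> : \sum_(k < K) xsel R Psi k * (rho (bk k) (pk k) (gk k) - mu * ctr (pk k) (qk k))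
   = Nsk Psi pk bk - mu * Dsk Psi pk - mu * Dsk Psi qk.
  rewrite /Nsk /Dsk !mulr_sumr -!sumrB; apply: eq_bigr => k _.
  by rewrite /ctr; ring.
by rewrite /Num /Den; ring.
Qed.

Lemma sum_add (S : {set 'I_K}) k (F F' : 'I_K -> R) : k \notin S ->
  (forall j, j != k -> F' j = F j) ->
  \sum_(j < K) xsel R (k |: S) j * F' j = \sum_(j < K) xsel R S j * F j + F' k.
Proof.
move=> kS HF.
rewrite (bigD1 k) //= [X in _ = X + _](bigD1 k) //= xselU1 eqxx mul1r.
rewrite {2}/xsel (negbTE kS) mul0r add0r addrC; congr (_ + _).
by apply: eq_bigr => j jk; rewrite xselU1 (negbTE jk) (HF j jk).
Qed.

Definition tprop k mu (t : R * R * R * R) :=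
  [/\ 0 <= t.1.1.1, 0 <= t.1.1.2, 0 <= t.1.2 & 0 <= t.2] /\
  t.1.1.2 + t.2 = W k /\ rho t.2 t.1.2 (h k) = Rm k /\
  0 < rho t.1.1.2 t.1.1.1 (gk k) - mu * ctr t.1.1.1 t.1.2.

Lemma F2c (S P : {set 'I_K}) (mu : R) : EE S <= mu ->
  (forall k, k \in S -> k \notin P -> mu < E k) ->
  (forall k, k \in P -> k \notin S -> E k <= mu) -> EE P <= mu.
Proof.
move=> hS hin hout.
have mu0 : 0 <= mu := le_trans (EE_ge0 S) hS.
apply: EE_least => r /EEsetP [p [pk [bk [qk [wk [hf ->]]]]]].
have [H1 [H2 [H3 H4]]] := hf.
have ht : forall k, exists t, (k \in S) && (k \notin P) -> tprop k mu t.
  move=> k; case: (boolP ((k \in S) && (k \notin P))) => [/andP[kS kP]|_];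
    last by exists (0, 0, 0, 0).
  have [a [b [c [d [Ha [Hb [Hc Hd]]]]]]] := trade_good mu0 (hin k kS kP).
  by exists (a, b, c, d).
have [tf htf] := choice ht.
have hT : forall k, k \in S -> k \notin P -> tprop k mu (tf k).
  by move=> k kS kP; apply: htf; rewrite kS kP.
pose sel k (x : R) (y : R) := if k \in S then (if k \in P then x else y) else 0.
pose pk' k := sel k (pk k) (tf k).1.1.1.
pose bk' k := sel k (bk k) (tf k).1.1.2.
pose qk' k := sel k (qk k) (tf k).1.2.
pose wk' k := sel k (wk k) (tf k).2.
have hf' : Feas S p pk' bk' qk' wk'.
  split => //; split; [|split].
  - move=> k; rewrite /pk' /bk' /qk' /wk' /sel; case: ifP => kS; last by split.
    case: ifP => kP; first exact: H2.
    by have [[] ] := hT k kS (negbT kP).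
  - move=> k; rewrite /pk' /bk' /qk' /wk' /sel /xsel; case: ifP => kS; last by rewrite add0r mul0r.
    case: ifP => kP; first by rewrite H3 /xsel kP.
    by have [_ [-> _]] := hT k kS (negbT kP); rewrite mul1r.
  - move=> k; rewrite /pk' /bk' /qk' /wk' /sel /xsel; case: ifP => kS; last by rewrite rho0b mul0r.
    case: ifP => kP; first by rewrite H4 /xsel kP.
    by have [_ [_ [-> _]]] := hT k kS (negbT kP); rewrite mul1r.
have hel := EE_ub (proj2 (EEsetP S _) (ex_intro _ p (ex_intro _ pk' (ex_intro _ bk'
   (ex_intro _ qk' (ex_intro _ wk' (conj hf' erefl))))))).
have Y'0 := Den_pos hf'.
have Y0 := Den_pos hf.
have h1 : Num S p pk' bk' - mu * Den S p pk' qk' <= 0.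
  rewrite subr_le0 -ler_pdivrMr //; exact: le_trans hel hS.
rewrite ler_pdivrMr // -subr_le0; apply: le_trans h1.
rewrite !decomp lerD2l; apply: ler_sum => k _.
have gk0 := hg k (kp k).
case: (xsel01 P k) => [[-> kP]|[-> kP]]; case: (xsel01 S k) => [[-> kS]|[-> kS]].
- by rewrite /pk' /bk' /qk' /sel kS kP.
- rewrite mul1r mul0r.
  have hfT : feasT k (pk k) (bk k) (qk k) (wk k).
    case: (H2 k) => a0 b0 c0 d0; split; first by split.
    by rewrite H3 H4 /xsel kP !mul1r; split.
  have := trade_le hfT; have := ctr_pos hfT; have := hout k kP kS => h2 h3 h4.
  have : E k * ctr (pk k) (qk k) <= mu * ctr (pk k) (qk k) by apply: ler_wpM2r => //; exact: ltW.
  lra.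
- rewrite mul0r mul1r /pk' /bk' /qk' /sel kS (negbTE kP).
  by have [_ [_ [_ /ltW]]] := hT k kS kP.
- by rewrite !mul0r.
Qed.

Lemma good_elt (S : {set 'I_K}) (gam : R) : 0 < gam ->
  exists p pk bk qk wk, Feas S p pk bk qk wk /\
    - gam < Num S p pk bk - EE S * Den S p pk qk.
Proof.
move=> gam0.
have lam0 := EE_ge0 S.
case: (eqVneq (EE S) 0) => [l0|lne].
  have [r /EEsetP [p [pk [bk [qk [wk [hf _]]]]]]] := set_ne S.
  exists p, pk, bk, qk, wk; split => //.
  by rewrite l0 mul0r subr0; have := Num_ge0 hf; lra.
have lpos : 0 < EE S by rewrite lt_def lne lam0.
set lam := EE S in lam0 lne lpos *.
set Q := 4 * (Cc * Cc) * (ca + cd).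
have Q0 : 0 <= Q by have := Cc_ge0; have := ca_ge0; have := cd_ge0 => *; pos.
have l2 : 0 < lam * lam by pos.
set M := 1 + Q / (lam * lam).
have M1 : 1 <= M by rewrite /M lerDl; pos.
have M0 : 0 < M by lra.
set eps := Num.min (lam / 2) (gam / M).
have eps0 : 0 < eps by rewrite /eps lt_min; apply/andP; split; pos.
have eps1 : eps <= lam / 2 by rewrite /eps ge_min lexx.
have eps2 : eps <= gam / M by rewrite /eps ge_min lexx orbT.
have hsup : has_sup (EEobj_set N0 xi Pc W Rm h g kp B gs S) by split; [exact: set_ne | exact: set_ub].
have [r Hr hr] := sup_adherent eps0 hsup.
move/EEsetP: Hr hr => [p [pk [bk [qk [wk [hf ->]]]]]] hr.
exists p, pk, bk, qk, wk; split => //.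
have Y0 := Den_pos hf.
have X0 := Num_ge0 hf.
have hNB := Num_bound hf.
set X := Num S p pk bk in X0 hNB hr *.
set Y := Den S p pk qk in Y0 hNB hr *.
have hX : (lam - eps) * Y < X by rewrite -ltr_pdivlMr.
have hYM : Y <= M.
  rewrite leNgt; apply/negP => hYM.
  have Y1 : 1 < Y by lra.
  set z := ca + cd * Y in hNB.
  have z0 : 0 <= z by rewrite /z; have := ca_ge0; have := cd_ge0 => *; pos.
  set s := Num.sqrt z in hNB.
  have s0 : 0 <= s by exact: sqrtr_ge0.
  have ss : s * s = z by rewrite -expr2 sqr_sqrtr.
  have u0 : 0 <= lam / 2 * Y by pos.
  have hu : lam / 2 * Y < Cc * s.
    apply: lt_le_trans hNB; apply: le_lt_trans hX.
    by apply: ler_wpM2r; [lra | lra].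
  have h1 : (lam / 2 * Y) * (lam / 2 * Y) < (Cc * s) * (Cc * s) by apply: ltr_pM.
  have h2 : (Cc * s) * (Cc * s) = Cc * Cc * z by rewrite -ss; ring.
  have h3 : Cc * Cc * z <= Cc * Cc * (ca + cd) * Y.
    rewrite -[X in _ <= X]mulrA; apply: ler_wpM2l.
      by apply: mulr_ge0; exact: Cc_ge0.
    rewrite /z mulrDl [cd * Y]mulrC lerD2r.
    rewrite -{1}[ca]mulr1; apply: ler_wpM2l; [exact: ca_ge0 | lra].
  have h4 : lam * lam * Y < Q.
    have : lam * lam * Y * Y < Q * Y.
      have e1 : lam * lam * Y * Y = 4 * ((lam / 2 * Y) * (lam / 2 * Y)) by field.
      have e2 : Q * Y = 4 * (Cc * Cc * (ca + cd) * Y) by rewrite /Q; ring.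
      rewrite e1 e2 ltr_pM2l; last lra.
      by apply: lt_le_trans h3; rewrite -h2.
    by rewrite ltr_pM2r.
  have h5 : lam * lam * M = lam * lam + Q by rewrite /M; field; rewrite gt_eqF.
  have : lam * lam * M < lam * lam * Y by rewrite ltr_pM2l.
  lra.
have h6 : eps * Y <= gam.
  apply: (le_trans (ler_wpM2l (ltW eps0) hYM)).
  apply: (le_trans (ler_wpM2r (ltW M0) eps2)).
  by rewrite divfK ?gt_eqF.
have : (lam - eps) * Y = lam * Y - eps * Y by ring.
lra.
Qed.

Lemma F3c (S : {set 'I_K}) (k : 'I_K) : k \notin S -> EE S < E k -> EE S < EE (k |: S).
Proof.
move=> kS hlt.
have lam0 := EE_ge0 S.
have [a [b [c [d [[a0 b0 c0 d0] [hbd [hrd hgam]]]]]]] := trade_good lam0 hlt.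
set gam := rho b a (gk k) - EE S * ctr a c in hgam.
have [p [pk [bk [qk [wk [hf hX]]]]]] := good_elt S hgam.
have [H1 [H2 [H3 H4]]] := hf.
pose upd (x : R) (f : 'I_K -> R) j := if j == k then x else f j.
have hf' : Feas (k |: S) p (upd a pk) (upd b bk) (upd c qk) (upd d wk).
  split => //; split; [|split].
  - move=> j; rewrite /upd; case: eqP => _ //; exact: H2.
  - move=> j; rewrite /upd xselU1; case: eqP => [->|_]; [by rewrite mul1r | exact: H3].
  - move=> j; rewrite /upd xselU1; case: eqP => [->|_]; [by rewrite mul1r | exact: H4].
have hel := EE_ub (proj2 (EEsetP (k |: S) _) (ex_intro _ p (ex_intro _ (upd a pk)
   (ex_intro _ (upd b bk) (ex_intro _ (upd c qk) (ex_intro _ (upd d wk) (conj hf' erefl))))))).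
apply: lt_le_trans hel.
have eN : Num (k |: S) p (upd a pk) (upd b bk) = Num S p pk bk + rho b a (gk k).
  rewrite /Num /Nsk -addrA; congr (_ + _).
  rewrite (sum_add (F := fun j => rho (bk j) (pk j) (gk j))) //=.
    by rewrite /upd eqxx.
  by move=> j jk; rewrite /upd (negbTE jk).
have eD : Den (k |: S) p (upd a pk) (upd c qk) = Den S p pk qk + ctr a c.
  rewrite /Den /Dsk (sum_add (F := fun j => pk j / xi)) //=; last first.
    by move=> j jk; rewrite /upd (negbTE jk).
  rewrite (sum_add (F := fun j => qk j / xi)) //=; last first.
    by move=> j jk; rewrite /upd (negbTE jk).
  by rewrite /upd eqxx /ctr; ring.
have Y0 := Den_pos hf'.
rewrite ltr_pdivlMr // eN eD -subr_gt0.
have : EE S * (Den S p pk qk + ctr a c) = EE S * Den S p pk qk + EE S * ctr a c by ring.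
rewrite /gam in hgam hX.
lra.
Qed.

End Analysis.

Theorem corollary1 (R : realType) (K N : nat)
  (N0 xi Pc : R) (W Rm h : 'I_K -> R) (g : 'I_K -> 'I_N -> R)
  (kp : 'I_K -> 'I_N) (B gs : 'I_N -> R)
  (hN0 : 0 < N0) (hxi0 : 0 < xi) (hxi1 : xi <= 1) (hPc : 0 < Pc)
  (hW : forall k, 0 < W k) (hRm : forall k, 0 < Rm k) (hh : forall k, 0 < h k)
  (hg : forall k n, 0 < g k n) (hB : forall n, 0 < B n) (hgs : forall n, 0 < gs n)
  (hkp : forall k n, g k n <= g k (kp k))
  (horder : forall i j : 'I_K, (i < j)%N ->
     EEtrade N0 xi W Rm h g kp j < EEtrade N0 xi W Rm h g kp i) :
  let EE := EEopt N0 xi Pc W Rm h g kp B gs in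
  forall Psi' : {set 'I_K}, EE Psi' <= EE (alg2 EE).
Proof.
move=> EE Psi'.
apply: (@greedy_opt R K EE (EEtrade N0 xi W Rm h g kp)) => //.
- by move=> S P mu; apply: F2c.
- by move=> S k; apply: F3c.
Qed.
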